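(* Let $1\le t\le n$. The minimal prime ideals of $I_t(L_n)$ are exactly the ideals $\mathfrak p_F=(x_i: i\in F)$ with $F\in C_{n,t}$, where $C_{n,t}$ is the set of subsets $F=\{i_1,\ldots,i_r\}\subseteq[n]$, $i_1<\cdots<i_r$, satisfying: (1) $1\le i_1\le t$; (2) $i_2>t$; (3) $1\le i_{j+1}-i_j\le t$ for $j=1,\ldots,r-1$; (4) $i_{j+2}-i_j>t$ for $j=1,\ldots,r-2$; (5) $i_{r-1}<n-t+1$; (6) $n-t+1\le i_r\le n$ (conditions referring to indices not in $\{1,\ldots,r\}$ are vacuous). Equivalently, $C_{n,t}$ is the set of minimal vertex covers of $\Delta_{n,t}$.
   Context: $K$ is a field, $S=K[x_1,\ldots,x_n]$, $I_t(L_n)=(u_1,\ldots,u_{n-t+1})$ with $u_i=x_ix_{i+1}\cdots x_{i+t-1}$. $\Delta_{n,t}$ is the simplicial complex on $[n]$ with facets $\{i,\ldots,i+t-1\}$, $i=1,\ldots,n-t+1$; a vertex cover is a subset of $[n]$ meeting every facet, minimal if no proper subset is a vertex cover. *)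

(* Defs.v *)
From HB Require Import structures.
From mathcomp Require Import all_boot all_order all_algebra.
From mathcomp Require Import mpoly.
Set Implicit Arguments. Unset Strict Implicit. Unset Printing Implicit Defensive.
Import GRing.Theory.
Local Open Scope ring_scope.

Section Ideals.
Variable R : comNzRingType.

Definition is_ideal (I : R -> Prop) : Prop :=
  [/\ I 0, (forall a b, I a -> I b -> I (a + b)) & (forall r a, I a -> I (r * a))].

Definition is_prime_ideal (P : R -> Prop) : Prop :=
  [/\ is_ideal P, ~ P 1 & (forall a b, P (a * b) -> P a \/ P b)].

Definition ideal_gen (G : R -> Prop) : R -> Prop :=
  fun p => exists s : seq (R * R),
    (forall c, c \in s -> G c.2) /\ p = \sum_(c <- s) c.1 * c.2.

Definition subideal (I J : R -> Prop) : Prop := forall x, I x -> J x.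

Definition minimal_prime_of (I P : R -> Prop) : Prop :=
  [/\ is_prime_ideal P, subideal I P &
      forall Q, is_prime_ideal Q -> subideal I Q -> subideal Q P -> subideal P Q].
End Ideals.

(* Variables are indexed 0-based by 'I_n: 'X_i (i : 'I_n) stands for x_{i+1}. *)

(* u_{i+1} = x_{i+1} x_{i+2} ... x_{i+t}, for 0 <= i <= n - t (0-based i). *)
Definition path_gen (K : fieldType) (n t i : nat) : {mpoly K[n]} :=
  \prod_(j < n | (i <= j < i + t)%N) 'X_j.

Definition It_Ln (K : fieldType) (n t : nat) : {mpoly K[n]} -> Prop :=
  ideal_gen (fun g => exists i : nat, (i + t <= n)%N /\ g = path_gen K n t i).

Definition pF (K : fieldType) (n : nat) (F : {set 'I_n}) : {mpoly K[n]} -> Prop :=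
  ideal_gen (fun g => exists2 i : 'I_n, i \in F & g = 'X_i).

Definition idx_seq (n : nat) (F : {set 'I_n}) : seq nat :=
  sort leq [seq (val i).+1 | i in F].

(* C_{n,t}; with s = idx_seq F, i_{j+1} = s`_j (0-based list position). *)
Definition in_C (n t : nat) (F : {set 'I_n}) : Prop :=
  let s := idx_seq F in
  let r := size s in
  let i := fun j => nth 0%N s j in
  (0 < r)%N /\
  (1 <= i 0 <= t)%N /\
  ((1 < r)%N -> (t < i 1)%N) /\
  (forall j, (j.+1 < r)%N -> (i j < i j.+1)%N /\ (1 <= i j.+1 - i j <= t)%N) /\
  (forall j, (j.+2 < r)%N -> (t < i j.+2 - i j)%N) /\
  ((1 < r)%N -> (i (r.-2) < n - t + 1)%N) /\
  (n - t + 1 <= i (r.-1) <= n)%N.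

(* Delta_{n,t}: facets {i,...,i+t-1}; 0-based facet with start i, i + t <= n. *)
Definition facet (n t i : nat) : {set 'I_n} := [set j : 'I_n | (i <= j < i + t)%N].

Definition vertex_cover (n t : nat) (F : {set 'I_n}) : Prop :=
  forall i : nat, (i + t <= n)%N -> F :&: facet n t i != set0.

Definition minimal_vertex_cover (n t : nat) (F : {set 'I_n}) : Prop :=
  vertex_cover t F /\ (forall G : {set 'I_n}, G \proper F -> ~ vertex_cover t G).

(* Main.v *)
Require Import Defs.
From HB Require Import structures.
From mathcomp Require Import all_boot all_order all_algebra.
From mathcomp Require Import mpoly.
From mathcomp Require Import zify.
From Stdlib Require Import ClassicalEpsilon Classical FunctionalExtensionality PropExtensionality.
Set Implicit Arguments. Unset Strict Implicit. Unset Printing Implicit Defensive.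

Lemma find_step (f : nat -> nat) i N : f 0 <= i -> i < f N ->
  exists k, k < N /\ f k <= i /\ i < f k.+1.
Proof.
elim: N => [|N IH] h0 hN; first lia.
case: (leqP (f N) i) => hfN; first by exists N; split => //; lia.
have [k [hk hk']] := IH h0 hfN; exists k; split => //; lia.
Qed.

Section E.
Variables (e : nat -> nat) (r n t : nat).
Hypotheses (he0 : e 0 = 0) (her : e r.+1 = n.+1)
  (hmono : forall a b, a < b -> b <= r.+1 -> e a < e b) (ht1 : 1 <= t) (htn : t <= n).

Lemma erefl_lt a b : a <= r.+1 -> b <= r.+1 -> e a < e b -> a < b.
Proof.
move=> ha hb hab; case: (ltnP a b) => // hba.
move: hba; rewrite leq_eqVlt => /orP [/eqP Eba|hba]; first by move: hab; rewrite Eba; lia.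
by have := hmono hba ha; lia.
Qed.

Lemma cov_iff : (forall k, k <= r -> e k.+1 <= e k + t) <->
  (forall i, i + t <= n -> exists k, k < r /\ i < e k.+1 /\ e k.+1 <= i + t).
Proof.
split.
  move=> G i hi.
  have h0 : e 0 <= i by rewrite he0.
  have hN : i < e r.+1 by rewrite her; lia.
  have [k [hk [h1 h2]]] := find_step h0 hN.
  have Gk := G k hk; exists k; split; last lia.
  case: (ltnP k r) => // hkr; have Ekr : k = r by lia.
  by move: Gk h1; rewrite Ekr her; lia.
move=> C k hk; case: (leqP (e k.+1) (e k + t)) => // hgap.
have hkn : e k + t <= n.
  have : e k.+1 <= e r.+1.
    case: (ltnP k r) => hkr; last by have -> : k = r by lia.
    by apply: ltnW; apply: hmono.
  rewrite her; lia.
have [m [hm [h1 h2]]] := C _ hkn.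
have := @erefl_lt k m.+1 (leqW hk) (ltnW hm) h1.
have := @erefl_lt m.+1 k.+1 (ltnW hm) hk; lia.
Qed.

Lemma priv_iff k : k < r ->
  (exists i, i + t <= n /\ i < e k.+1 /\ e k.+1 <= i + t /\
     forall m, m < r -> i < e m.+1 -> e m.+1 <= i + t -> m = k)
  <-> e k + t < e k.+2.
Proof.
move=> hk; split.
  move=> [i [hi [h1 [h2 Hu]]]].
  have A : e k <= i.
    case: k hk h1 h2 Hu => [|k] hk h1 h2 Hu; first by rewrite he0.
    case: (leqP (e k.+1) i) => // hlt.
    have := hmono (ltnSn k.+1) (ltnW hk).
    have := Hu k (ltnW hk) hlt; lia.
  have B : i + t < e k.+2.
    case: (ltnP k.+1 r) => hk1.
      case: (ltnP (i + t) (e k.+2)) => // hle.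
      have := hmono (ltnSn k.+1) hk.
      have := Hu k.+1 hk1; lia.
    have -> : k.+2 = r.+1 by lia.
    rewrite her; lia.
  lia.
move=> Q.
have m1 : e k < e k.+1 by apply: hmono; lia.
have m2 : e k.+1 < e k.+2 by apply: hmono; lia.
have m3 : e k.+2 <= n.+1.
  rewrite -her; case: (ltnP k.+1 r) => hk1; last by have -> : k.+2 = r.+1 by lia.
  by apply: ltnW; apply: hmono.
exists (maxn (e k) (e k.+1 - t)); split; first lia.
split; first lia. split; first lia.
move=> m hm h1 h2.
have := @erefl_lt k m.+1 (leqW (ltnW hk)) (ltnW hm) ltac:(lia).
have := @erefl_lt m.+1 k.+2 (ltnW hm) hk ltac:(lia).
lia.
Qed.

Lemma inC_e (a : nat -> nat) (link : forall j, j < r -> a j = e j.+1) :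
  (0 < r /\
  (1 <= a 0 <= t) /\
  ((1 < r) -> (t < a 1)) /\
  (forall j, (j.+1 < r) -> (a j < a j.+1) /\ (1 <= a j.+1 - a j <= t)) /\
  (forall j, (j.+2 < r) -> (t < a j.+2 - a j)) /\
  ((1 < r) -> (a (r.-2) < n - t + 1)) /\
  (n - t + 1 <= a (r.-1) <= n))
  <-> (forall k, k <= r -> e k.+1 <= e k + t) /\ (forall k, k < r -> e k + t < e k.+2).
Proof.
split.
  move=> [H0 [H1 [H2 [H3 [H4 [H5 H6]]]]]]; split.
    move=> k hk; case: k hk => [|k] hk.
      have := link _ H0; rewrite he0; lia.
    have [Ekr|Ekr] := eqVneq k.+1 r.
      move: H6 her; rewrite -Ekr /= => H6 her'.
      have := link _ hk; lia.
    have hk' : k.+1 < r by lia.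
    have := H3 k hk'; have := link _ (ltnW hk'); have := link _ hk'; lia.
  move=> k hk; have [r1|r1] := eqVneq r 1.
    have k0 : k = 0 by lia.
    have : e 2 = n.+1 by rewrite -her r1.
    rewrite k0 he0; lia.
  case: k hk => [|k] hk.
    have := H2 ltac:(lia); have := link _ (_ : 1 < r); rewrite he0; lia.
  have [Ekr|Ekr] := eqVneq k.+2 r.
    move: H5 her; rewrite -Ekr /= => H5 her'.
    have := link _ (_ : k < r); lia.
  have hk' : k.+2 < r by lia.
  have := H4 k hk'; have := link _ (_ : k < r); have := link _ hk'; lia.
move=> [G Q].
have H0 : 0 < r.
  rewrite lt0n; apply/eqP => r0.
  have E1 : e 1 = n.+1 by rewrite -her r0.
  have := G 0 (leq0n _); rewrite he0; lia.
split => //; split.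
  have := link _ H0; have := hmono (ltnSn 0) ltac:(lia); have := G 0 (leq0n _); lia.
split.
  move=> h; have := link _ h; have := Q 0 H0; rewrite he0; lia.
split.
  move=> j hj; have := link _ (ltnW hj); have := link _ hj; have := G j.+1 (ltnW hj).
  have := hmono (ltnSn j.+1) (ltnW hj); lia.
split.
  move=> j hj; have := link _ (_ : j < r); have := link _ hj; have := Q j.+1 (_ : j.+1 < r); lia.
split.
  move=> h; have [r' Er] : exists r', r = r'.+2 by exists r.-2; lia.
  have := Q r'.+1 ltac:(lia); have := link _ (_ : r' < r); rewrite Er /=.
  move: her; rewrite Er; lia.
have [r' Er] : exists r', r = r'.+1 by exists r.-1; lia.
have := G r (leqnn r); have := hmono (ltnSn r) (leqnn _); have := link _ (_ : r' < r).
rewrite Er /=; move: her; rewrite Er; lia.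
Qed.
End E.


Section Conc.
Variables (n t : nat) (F : {set 'I_n}).
Hypotheses (ht1 : 1 <= t) (htn : t <= n).

Let s := idx_seq F.
Let r := size s.
Let e j := nth 0 (0 :: rcons s n.+1) j.

Lemma mem_s x : x \in s <-> exists2 i : 'I_n, i \in F & x = (val i).+1.
Proof.
rewrite /s /idx_seq mem_sort; split.
  by move=> /mapP [i]; rewrite mem_enum => Hi ->; exists i.
by move=> [i Hi ->]; apply/mapP; exists i; rewrite ?mem_enum.
Qed.

Lemma s_sorted : sorted ltn s.
Proof.
rewrite ltn_sorted_uniq_leq sort_uniq sort_sorted ?andbT; last exact: leq_total.
rewrite map_inj_uniq ?enum_uniq // => i j /= [] /val_inj.
by [].
Qed.

Lemma s_range x : x \in s -> 0 < x <= n.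
Proof. by move=> /mem_s [i _ ->]; rewrite /= ltn_ord. Qed.

Lemma s'_sorted : sorted ltn (0 :: rcons s n.+1).
Proof.
rewrite /= rcons_path.
have H := s_sorted; have Hr := s_range.
apply/andP; split.
  move: H Hr; case: (s) => [|x s0] //= H Hr; rewrite H andbT.
  by case/andP: (Hr x (mem_head x s0)).
have := mem_last 0 s; rewrite inE => /orP [/eqP ->//|/Hr /andP [_ h]]; exact: h.
Qed.

Lemma e0 : e 0 = 0. Proof. by []. Qed.
Lemma er : e r.+1 = n.+1.
Proof. by rewrite /e /= nth_rcons ltnn eqxx. Qed.
Lemma emono a b : a < b -> b <= r.+1 -> e a < e b.
Proof.
move=> hab hb; apply: (sorted_ltn_nth ltn_trans 0 s'_sorted) => //;
  rewrite inE /= size_rcons; lia.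
Qed.
Lemma elink j : j < r -> nth 0 s j = e j.+1.
Proof. by move=> hj; rewrite /e /= nth_rcons hj. Qed.

Lemma e_in k : k < r -> exists2 i : 'I_n, i \in F & e k.+1 = (val i).+1.
Proof. by move=> hk; rewrite -elink //; apply/mem_s; apply: mem_nth. Qed.

Lemma in_e (i : 'I_n) : i \in F -> exists2 k, k < r & e k.+1 = (val i).+1.
Proof.
move=> Hi; have Hs : (val i).+1 \in s by apply/mem_s; exists i.
by exists (index (val i).+1 s); rewrite ?index_mem // -elink ?index_mem // nth_index.
Qed.

Lemma cover_e : vertex_cover t F <->
  (forall i, i + t <= n -> exists k, k < r /\ i < e k.+1 /\ e k.+1 <= i + t).
Proof.
split.
  move=> C i hi; have /set0Pn [j] := C i hi; rewrite !inE => /andP [jF hj].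
  have [k hk Ek] := in_e jF; exists k; split => //; rewrite Ek /=; lia.
move=> C i hi; have [k [hk [h1 h2]]] := C i hi.
have [j jF Ej] := e_in hk; apply/set0Pn; exists j; rewrite !inE jF /=.
move: h1 h2; rewrite Ej /=; lia.
Qed.

Lemma cover_mono (G H : {set 'I_n}) : G \subset H -> vertex_cover t G -> vertex_cover t H.
Proof.
move=> GH C i hi; have /set0Pn [j] := C i hi; rewrite !inE => /andP [jG hj].
by apply/set0Pn; exists j; rewrite !inE (subsetP GH _ jG).
Qed.

Lemma minimal_iff : minimal_vertex_cover t F <->
  vertex_cover t F /\ (forall j, j \in F -> ~ vertex_cover t (F :\ j)).
Proof.
split.
  by move=> [C M]; split => // j jF; apply: M; apply: properD1.
move=> [C M]; split => // G /properP [GF [j jF jG]] CG.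
apply: (M j jF); apply: cover_mono CG.
by apply/subsetP => x xG; rewrite !inE (subsetP GF _ xG) andbT; apply/eqP => Exj; move: jG; rewrite -Exj xG.
Qed.

Lemma einj a b : a <= r.+1 -> b <= r.+1 -> e a = e b -> a = b.
Proof.
move=> ha hb Eab; case: (ltngtP a b) => // hab.
  by have := emono hab hb; lia.
by have := emono hab ha; lia.
Qed.

Lemma notcover_iff (j : 'I_n) k : vertex_cover t F -> k < r -> e k.+1 = (val j).+1 -> j \in F ->
  (~ vertex_cover t (F :\ j) <->
   exists i, i + t <= n /\ i < e k.+1 /\ e k.+1 <= i + t /\
     forall m, m < r -> i < e m.+1 -> e m.+1 <= i + t -> m = k).
Proof.
move=> C hk Ek jF; split.
  move=> NC; have [i Hi] := not_all_ex_not _ _ NC.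
  have [hi Hn] := imply_to_and _ _ Hi.
  have E0 : (F :\ j) :&: facet n t i == set0 by apply/negPn/negP.
  have /set0Pn [j' ] := C i hi; rewrite !inE => /andP [j'F hj'].
  have Ejj : j' = j.
    apply/eqP; apply/negPn/negP => Ne.
    by move/eqP: E0 => /setP /(_ j'); rewrite !inE Ne j'F hj'.
  exists i; split => //; split; first by move: hj'; rewrite Ek Ejj /=; lia.
  split; first by move: hj'; rewrite Ek Ejj /=; lia.
  move=> m hm h1 h2; have [x xF Ex] := e_in hm.
  have Exj : x = j.
    apply/eqP; apply/negPn/negP => Ne.
    have hx : x \in (F :\ j) :&: facet n t i.
      rewrite !inE Ne xF /=; move: h1 h2; rewrite Ex /= => h1 h2; apply/andP; split; lia.
    by rewrite (eqP E0) inE in hx.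
  have : e m.+1 = e k.+1 by rewrite Ex Ek Exj.
  by move/einj => H; have := H (ltnW hm) (ltnW hk); lia.
move=> [i [hi [h1 [h2 Hu]]]] C'.
have /set0Pn [x] := C' i hi; rewrite !inE => /andP [/andP [Nxj xF] hx].
have [m hm Em] := in_e xF.
have Emk := Hu m hm ltac:(rewrite Em /=; lia) ltac:(rewrite Em /=; lia).
move: Em; rewrite Emk Ek => [[]] /val_inj Exj.
by move: Nxj; rewrite Exj eqxx.
Qed.

Lemma comb_main : in_C t F <-> minimal_vertex_cover t F.
Proof.
have he0 := e0; have her := er; have hmono := emono.
rewrite minimal_iff.
transitivity ((forall k, k <= r -> e k.+1 <= e k + t) /\ (forall k, k < r -> e k + t < e k.+2)).
  exact: (inC_e he0 her hmono ht1 htn elink).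
split.
  move=> [G Q].
  have C : vertex_cover t F by apply cover_e; apply (cov_iff he0 her hmono ht1 htn); exact G.
  split => // j jF; have [k hk Ek] := in_e jF.
  apply (notcover_iff C hk Ek jF); apply (priv_iff he0 her hmono ht1 htn hk); exact: Q.
move=> [C M]; split; first by apply (cov_iff he0 her hmono ht1 htn); apply cover_e.
move=> k hk; have [j jF Ej] := e_in hk.
apply (priv_iff he0 her hmono ht1 htn hk); apply (notcover_iff C hk Ej jF); exact: M.
Qed.
End Conc.

Import GRing.Theory.
Local Open Scope ring_scope.
Section Alg.
Variable R : comNzRingType.

Lemma ideal_gen_ideal (G : R -> Prop) : is_ideal (ideal_gen G).
Proof.
split.
- by exists [::]; rewrite big_nil.
- move=> a b [s [Hs ->]] [s' [Hs' ->]]; exists (s ++ s'); split; last by rewrite big_cat.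
  by move=> c; rewrite mem_cat => /orP [/Hs|/Hs'].
- move=> r a [s [Hs ->]]; exists [seq (r * c.1, c.2) | c <- s]; split.
  + by move=> c /mapP [d /Hs Hd ->].
  + by rewrite big_map mulr_sumr; apply: eq_bigr => c _; rewrite mulrA.
Qed.

Lemma ideal_gen_in (G : R -> Prop) g : G g -> ideal_gen G g.
Proof. by move=> Hg; exists [:: (1, g)]; split; [move=> c; rewrite inE => /eqP -> | rewrite big_seq1 mul1r]. Qed.

Lemma ideal_gen_min (G J : R -> Prop) : is_ideal J -> (forall g, G g -> J g) ->
  subideal (ideal_gen G) J.
Proof.
move=> [J0 JD JM] HG x [s [Hs ->]]; elim: s Hs => [|c s IH] Hs; first by rewrite big_nil.
rewrite big_cons; apply: JD; first by apply: JM; apply: HG; apply: Hs; rewrite inE eqxx.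
by apply: IH => d Hd; apply: Hs; rewrite inE Hd orbT.
Qed.

Lemma idealN (J : R -> Prop) a : is_ideal J -> J a -> J (- a).
Proof. by move=> [_ _ JM] Ha; rewrite -mulN1r; apply: JM. Qed.

Lemma idealB (J : R -> Prop) a b : is_ideal J -> J a -> J b -> J (a - b).
Proof. by move=> HJ Ha Hb; case: (HJ) => _ JD _; apply: JD => //; apply: idealN. Qed.

Lemma prime_prod (P : R -> Prop) (I : finType) (Q : pred I) (f : I -> R) :
  is_prime_ideal P -> P (\prod_(j | Q j) f j) -> exists j, Q j /\ P (f j).
Proof.
move=> [_ P1 Pm]; elim/big_rec: _ => [|i x Qi IH]; first by move=> /P1.
by move=> /Pm [H|/IH //]; exists i.
Qed.
End Alg.

Section Poly.
Variables (K : fieldType) (n : nat).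

Definition phi (F : {set 'I_n}) : {mpoly K[n]} -> {mpoly K[n]} :=
  mmap (@mpolyC n K) (fun i => if i \in F then 0 else 'X_i).

Lemma phiX (F : {set 'I_n}) i : phi F 'X_i = if i \in F then 0 else 'X_i.
Proof. by rewrite /phi mmapX mmap1U. Qed.

Lemma phiC (F : {set 'I_n}) c : phi F c%:MP = c%:MP.
Proof. by rewrite /phi mmapC. Qed.

Lemma phiM (F : {set 'I_n}) : {morph phi F : x y / x * y}.
Proof. by move=> x y; rewrite /phi rmorphM. Qed.

Lemma phiD (F : {set 'I_n}) : {morph phi F : x y / x + y}.
Proof. by move=> x y; rewrite /phi rmorphD. Qed.

Lemma phi1 (F : {set 'I_n}) : phi F 1 = 1.
Proof. by rewrite /phi rmorph1. Qed.

Lemma phi0 (F : {set 'I_n}) : phi F 0 = 0.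
Proof. by rewrite /phi rmorph0. Qed.

Lemma pF_ideal (F : {set 'I_n}) : is_ideal (@pF K n F).
Proof. exact: ideal_gen_ideal. Qed.

Lemma pF_X (F : {set 'I_n}) (i : 'I_n) : i \in F -> @pF K n F 'X_i.
Proof. by move=> Hi; apply: ideal_gen_in; exists i. Qed.

Lemma pF_sub_phi (F : {set 'I_n}) p : @pF K n F p -> phi F p = 0.
Proof.
move=> H; apply: (ideal_gen_min (J := fun p => phi F p = 0)) H; last by move=> g [i Hi ->]; rewrite phiX Hi.
split; first by rewrite phi0.
- by move=> a b Ha Hb; rewrite phiD Ha Hb addr0.
- by move=> r a Ha; rewrite phiM Ha mulr0.
Qed.

Lemma phi_diff (F : {set 'I_n}) p : @pF K n F (p - phi F p).
Proof.
have HJ := pF_ideal F.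
pose S q := @pF K n F (q - phi F q).
have SD a b : S a -> S b -> S (a + b).
  move=> Ha Hb; rewrite /S phiD opprD addrACA.
  by case: HJ => _ JD _; apply: JD.
have SM a b : S a -> S b -> S (a * b).
  move=> Ha Hb; rewrite /S phiM.
  have -> : a * b - phi F a * phi F b = (a - phi F a) * b + phi F a * (b - phi F b).
    by rewrite mulrBl mulrBr addrA subrK.
  case: HJ => _ JD JM; apply: JD; last exact: JM.
  by rewrite mulrC; apply: JM.
have S1 : S 1 by rewrite /S phi1 subrr; case: HJ.
have SC c : S c%:MP by rewrite /S phiC subrr; case: HJ.
have SX i : S 'X_i.
  rewrite /S phiX; case: ifP => Hi; first by rewrite subr0; apply: pF_X.
  by rewrite subrr; case: HJ.
elim/mpolyind: p => [|c m p _ _ Hp]; first by rewrite /S phi0 subrr; case: HJ.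
apply: (SD) => //; rewrite -mul_mpolyC; apply: (SM) => //.
rewrite mpolyXE_id; apply: (big_ind S) => // i Hi.
set k := m i; clearbody k; elim: k => [|k IH]; rewrite ?expr0 // exprS; by apply: (SM).
Qed.

Lemma pF_phi (F : {set 'I_n}) p : @pF K n F p <-> phi F p = 0.
Proof.
split; first exact: pF_sub_phi.
by move=> H; have := phi_diff F p; rewrite H subr0.
Qed.

Lemma pF_prime (F : {set 'I_n}) : is_prime_ideal (@pF K n F).
Proof.
split; first exact: pF_ideal.
- by rewrite pF_phi phi1; apply/eqP; exact: oner_neq0.
- move=> a b; rewrite !pF_phi phiM => /eqP; rewrite mulf_eq0 => /orP [/eqP|/eqP]; by [left|right].
Qed.

Lemma X_neq0 (i : 'I_n) : ('X_i : {mpoly K[n]}) != 0.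
Proof.
apply/eqP => H; have := mcoeffXU K i i; rewrite H mcoeff0 eqxx => /eqP.
by rewrite eq_sym oner_eq0.
Qed.

Lemma pF_X_inv (F : {set 'I_n}) (i : 'I_n) : @pF K n F 'X_i -> i \in F.
Proof.
rewrite pF_phi phiX; case: ifP => // _ H; by move: (X_neq0 i); rewrite H eqxx.
Qed.
End Poly.

Section Covers.
Variables (K : fieldType) (n t : nat).

Lemma min_sub (G : {set 'I_n}) : vertex_cover t G ->
  exists F : {set 'I_n}, F \subset G /\ minimal_vertex_cover t F.
Proof.
have : (#|G| < #|G|.+1)%N by [].
move: {2}#|G|.+1 => k; elim: k G => [|k IH] G //= HG Hc.
case: (classic (exists H : {set 'I_n}, H \proper G /\ vertex_cover t H)) => [[H [HG' HH]]|Hn].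
  have [|F [HF HFm]] := IH H _ HH.
    exact: leq_trans (proper_card HG') HG.
  by exists F; split => //; apply: subset_trans HF (proper_sub HG').
exists G; split => //; split => // H HH Hc'; apply: Hn; by exists H.
Qed.

Lemma It_sub_pF (F : {set 'I_n}) : vertex_cover t F -> subideal (@It_Ln K n t) (@pF K n F).
Proof.
move=> Hc; apply: ideal_gen_min; first exact: pF_ideal.
move=> g [i [Hi ->]]; have /set0Pn [j] := Hc i Hi.
rewrite inE => /andP [jF]; rewrite inE => Hj.
rewrite /path_gen (bigD1 j) //= mulrC; case: (pF_ideal K F) => _ _ JM; apply: JM.
exact: pF_X.
Qed.

Definition asb (Q : Prop) : bool := if excluded_middle_informative Q then true else false.
Lemma asbP (Q : Prop) : asb Q <-> Q.
Proof. by rewrite /asb; case: excluded_middle_informative. Qed.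

Lemma prime_cover (P : {mpoly K[n]} -> Prop) : is_prime_ideal P -> subideal (@It_Ln K n t) P ->
  exists F : {set 'I_n}, minimal_vertex_cover t F /\ subideal (@pF K n F) P.
Proof.
move=> HP HI.
pose G := [set i : 'I_n | asb (P 'X_i)].
have HG : vertex_cover t G.
  move=> i Hi; have := HI (path_gen K n t i) (ideal_gen_in (ex_intro _ i (conj Hi erefl))).
  move=> /(prime_prod HP) [j [Hj Pj]]; apply/set0Pn; exists j.
  by rewrite !inE Hj andbT; apply/asbP.
have [F [FG HF]] := min_sub HG; exists F; split => //.
case: HP => HPi _ _; apply: ideal_gen_min => // g [i Hi ->].
by have := subsetP FG i Hi; rewrite inE => /asbP.
Qed.
End Covers.

Lemma comb (n t : nat) (ht1 : (1 <= t)%N) (htn : (t <= n)%N) (F : {set 'I_n}) :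
  @in_C n t F <-> @minimal_vertex_cover n t F.
Proof. exact: comb_main. Qed.

Theorem theorem2p7 (K : fieldType) (n t : nat) (ht1 : (1 <= t)%N) (htn : (t <= n)%N) :
  (forall P : {mpoly K[n]} -> Prop,
     minimal_prime_of (@It_Ln K n t) P <->
     exists F : {set 'I_n}, @in_C n t F /\ (forall p, P p <-> @pF K n F p))
  /\ (forall F : {set 'I_n}, @in_C n t F <-> @minimal_vertex_cover n t F).
Proof.
split; last by move=> F; apply: comb.
move=> P; split.
  move=> [HP HI Hmin]; have [F [HF HFP]] := prime_cover HP HI.
  exists F; split; first by apply/comb.
  move=> p; split; last exact: HFP.
  apply: Hmin => //; first exact: pF_prime.
  by apply: It_sub_pF; case: HF.
move=> [F [HF HPF]].
have -> : P = @pF K n F.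
  by apply: functional_extensionality => p; apply: propositional_extensionality.
have /comb HFm := HF; move: HFm => /(_ ht1 htn) HFm.
split; first exact: pF_prime.
  by apply: It_sub_pF; case: HFm.
move=> Q HQ HIQ HQF.
have [G [HG HGQ]] := prime_cover HQ HIQ.
have GF : G \subset F.
  apply/subsetP => i Hi; apply: (pF_X_inv (K := K)); apply: HQF; apply: HGQ; exact: pF_X.
have -> : F = G.
  apply/eqP; rewrite eqEsubset GF andbT; apply/negPn/negP => HnFG.
  have HGp : G \proper F by rewrite properE GF HnFG.
  by case: HFm => _ /(_ G HGp); case: HG.
by [].
Qed.
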